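(* Let $A$ be a finite additive poset and $a\in A$ nonzero. The following are equivalent: (i) $a$ is a tile; (ii) the tail $A_a$ is isomorphic (as an additive poset) to an additive powerset $2^I$ for some set $I$; (iii) all atoms of $A_a$ are pairwise independent and their sum equals $a$; (iv) the expansion of $a$ as a sum of pairwise independent atoms of $A$ is unique up to permutation of the atoms.
   Context: An additive poset is a pair $(A,\le)$ where $A$ is an abelian group and $\le$ is a partial order on $A$ such that for all $a,b,c\in A$: $(\ast)$ if $b\le a$ and $c\le a$ then $b+c\le a$; $(\ast\ast)$ if $a\le b$ and $a\le c$ then $a\le a+b+c$. The tail $A_a=\{x:x\le a\}$ is an additive subposet. Elements $x,y$ are independent if $x\le x+y$. An atom is a nonzero $x$ with $A_x=\{0,x\}$. A tile is a nonzero $a$ such that any two distinct atoms of $A$ in $A_a$ are independent. For a set $I$, the additive powerset $2^I$ is the set of subsets of $I$ with symmetric difference as addition and inclusion as order. Isomorphism of additive posets means a bijection which is a group and order isomorphism. *)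

(* Defs.v *)
From HB Require Import structures.
From mathcomp Require Import all_boot all_order all_algebra.
Set Implicit Arguments. Unset Strict Implicit. Unset Printing Implicit Defensive.
Import GRing.Theory.
Local Open Scope ring_scope.

Definition additive_poset (A : zmodType) (le : rel A) : Prop :=
  [/\ reflexive le, antisymmetric le, transitive le,
      (forall a b c : A, le b a -> le c a -> le (b + c) a) &
      (forall a b c : A, le a b -> le a c -> le a (a + b + c))].

Definition tail (A : finZmodType) (le : rel A) (a : A) : {set A} :=
  [set x | le x a].

(* x is an atom of the subposet S (with the induced order):
   x in S, x nonzero, and {y in S | y <= x} = {0, x}.
   Atoms of A itself are atoms of [set: A]. *)
Definition atom_of (A : finZmodType) (le : rel A) (S : {set A}) (x : A) : bool :=
  [&& x \in S, x != 0 & [set y in S | le y x] == [set 0; x]].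

Definition indep (A : zmodType) (le : rel A) (x y : A) : bool := le x (x + y).

(* two-sided independence, used for "pairwise independent" families *)
Definition indep2 (A : zmodType) (le : rel A) (x y : A) : bool :=
  indep le x y && indep le y x.

Definition tile (A : finZmodType) (le : rel A) (a : A) : Prop :=
  a != 0 /\
  forall x y : A, atom_of le [set: A] x -> atom_of le [set: A] y ->
    x \in tail le a -> y \in tail le a -> x != y -> indep le x y.

(* symmetric difference: the addition of the additive powerset 2^I *)
Definition symdiff (I : finType) (S T : {set I}) : {set I} := (S :\: T) :|: (T :\: S).

(* The tail A_a (with restricted addition and order) is isomorphic to 2^I:
   f restricted to A_a is a bijection onto {set I}, additive (+ to symmetric
   difference) and an order isomorphism (le to inclusion). *)
Definition tail_iso_powerset (A : finZmodType) (le : rel A) (a : A)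
    (I : finType) (f : A -> {set I}) : Prop :=
  [/\ {in tail le a &, injective f},
      (forall S : {set I}, exists2 x, x \in tail le a & f x = S),
      {in tail le a &, forall x y, f (x + y) = symdiff (f x) (f y)} &
      {in tail le a &, forall x y, le x y = (f x \subset f y)}].

Definition indep_atom_expansion (A : finZmodType) (le : rel A) (a : A) (s : seq A) : Prop :=
  [/\ all (atom_of le [set: A]) s, pairwise (indep2 le) s & \sum_(x <- s) x = a].

(* Main.v *)
Require Import Defs.
From HB Require Import structures.
From mathcomp Require Import all_boot all_order all_algebra all_fingroup.
Import GRing.Theory FinRing.Theory.
Local Open Scope ring_scope.

Set Implicit Arguments. Unset Strict Implicit.
Section AP.
Variables (A : finZmodType) (le : rel A) (hA : additive_poset le).
Implicit Types x y z a b c : A.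

Lemma leR x : le x x. Proof. by case: hA. Qed.
Lemma leA x y : le x y -> le y x -> x = y.
Proof. case: hA => _ h _ _ _ H1 H2; apply: h; by rewrite H1 H2. Qed.
Lemma leT x y z : le x y -> le y z -> le x z.
Proof. case: hA => _ _ h _ _ H1 H2; exact: (h y). Qed.
Lemma leD a b c : le b a -> le c a -> le (b + c) a.
Proof. by case: hA => _ _ _ h _; apply: h. Qed.
Lemma leX a b c : le a b -> le a c -> le a (a + b + c).
Proof. by case: hA => _ _ _ _ h; apply: h. Qed.

Lemma leMn x y n : le x y -> le (x *+ n.+1) y.
Proof.
move=> h; elim: n => [|n IH]; first by rewrite mulr1n.
by rewrite mulrS leD.
Qed.

Lemma le0 y : le 0 y.
Proof.
have := expg_order y; rewrite zmodXgE zmod1gE -(prednK (order_gt0 y)) => <-.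
exact/leMn/leR.
Qed.

Lemma leN x y : le x y -> le (- x) y.
Proof.
move=> h; have := expg_order x; rewrite zmodXgE zmod1gE -(prednK (order_gt0 x)) mulrS.
move/eqP; rewrite addrC addr_eq0 => /eqP <-.
case: (#[x]%g.-1) => [|n]; first by rewrite mulr0n le0.
exact: leMn.
Qed.

Lemma oppE x : - x = x.
Proof. apply: leA; first exact/leN/leR. by rewrite -{1}(opprK x); apply/leN/leR. Qed.

Lemma addxx x : x + x = 0.
Proof. by rewrite -{1}(oppE x) addNr. Qed.

Lemma Zlem x b : le x b -> le x (x + b) -> x = 0.
Proof.
move=> h1 h2; have := leX h1 h2.
rewrite addrA => h; apply: leA _ (le0 _); move: h.
by rewrite -addrA addxx.
Qed.

Lemma isym x y : le x (x + y) -> le y (y + x).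
Proof.
move=> h; suff : le (x + (x + y)) (x + y) by rewrite addrA addxx add0r addrC.
by rewrite leD // leR.
Qed.

Lemma down x y z : le x (x + z) -> le y z -> le x (x + y).
Proof.
move=> h1 h2; have h3 : le y (z + x) by apply: leT h2 (isym h1).
have := leX h2 h3; rewrite -addrA (addrA z) addxx add0r => h; exact: isym.
Qed.


Lemma sum_le (I : Type) (r : seq I) (P : pred I) (F : I -> A) b :
  (forall i, P i -> le (F i) b) -> le (\sum_(i <- r | P i) F i) b.
Proof.
move=> h; apply: (big_ind (fun u => le u b)) => //; first exact: le0.
by move=> u v hu hv; apply: leD.
Qed.

Lemma indep_sum (I : Type) (r : seq I) (P : pred I) (F : I -> A) x :
  (forall i, P i -> le x (x + F i)) -> le x (x + \sum_(i <- r | P i) F i).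
Proof.
move=> h; apply: (big_ind (fun u => le x (x + u))) => //.
  by rewrite addr0 leR.
move=> u v hu hv; have := leX hu hv.
have -> // : x + (x + u) + (x + v) = x + (u + v).
by rewrite [x + (x + u)]addrA addxx add0r addrCA.
Qed.

Lemma pw_le (s : seq A) x : pairwise (indep2 le) s -> x \in s -> le x (\sum_(y <- s) y).
Proof.
elim: s => // y s IH; rewrite pairwise_cons big_cons => /andP[/allP hy hs].
have hyS : le y (y + \sum_(z <- s) z).
  rewrite big_seq; apply: indep_sum => z zs; by case/andP: (hy z zs).
rewrite in_cons => /orP[/eqP-> // | xs].
apply: leT (IH hs xs) _; rewrite addrC; exact: isym.
Qed.

Lemma atomP x : reflect (x != 0 /\ forall y, le y x -> y = 0 \/ y = x)
  (atom_of le [set: A] x).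
Proof.
rewrite /atom_of in_setT /=; apply: (iffP andP) => [[nz /eqP E]|[nz h]]; split => //.
- move=> y hy; have : y \in [set y in [set: A] | le y x] by rewrite inE in_setT hy.
  by rewrite E !inE => /orP[/eqP->|/eqP->]; [left|right].
- apply/eqP/setP => y; rewrite !inE; apply/idP/idP.
  + by move/h => [->|->]; rewrite eqxx ?orbT.
  + by case/orP => /eqP->; [exact: le0 | exact: leR].
Qed.

Lemma atom_nz x : atom_of le [set: A] x -> x != 0.
Proof. by case/atomP. Qed.

Lemma atom_tail a x : atom_of le (tail le a) x = atom_of le [set: A] x && le x a.
Proof.
rewrite /atom_of /tail inE in_setT /=; case hx: (le x a); last by rewrite andbF.
rewrite andbT; congr (_ && (_ == _)); apply/setP => y; rewrite !inE.
by case hy: (le y x); rewrite ?andbF ?andbT // (leT hy hx).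
Qed.

Lemma exists_atom b : b != 0 -> exists2 z, atom_of le [set: A] z & le z b.
Proof.
move: {2}#|tail le b| (leqnn #|tail le b|) => n; elim: n b => [|n IH] b hn bnz.
  move: hn; rewrite leqn0 => /eqP/cards0_eq/setP/(_ b).
  by rewrite /tail !inE leR.
case: (boolP [exists y, [&& le y b, y != 0 & y != b]]) =>
    [/existsP[y /and3P[hyb ynz ynb]]|H]; last first.
  exists b; last exact: leR.
  apply/atomP; split => // y hy; move/existsPn: H => /(_ y).
  by rewrite hy /= negb_and !negbK => /orP[/eqP|/eqP]; [left|right].
have hlt : (#|tail le y| <= n)%N.
  rewrite -ltnS; apply: leq_trans hn; apply: proper_card; apply/properP; split.
    by apply/subsetP => w; rewrite /tail !inE => hw; exact: leT hw hyb.
  exists b; rewrite /tail !inE ?leR //; apply/negP => hby.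
  by move: ynb; rewrite (leA hyb hby) eqxx.
have [z az hz] := IH y hlt ynz.
by exists z => //; exact: leT hz hyb.
Qed.

Definition Pt a := forall x y, atom_of le [set: A] x -> atom_of le [set: A] y ->
  le x a -> le y a -> x != y -> le x (x + y).

Lemma Pt_le a b : Pt a -> le b a -> Pt b.
Proof. move=> P ba x y ax ay xb yb; apply: P => //; exact: leT ba. Qed.

Lemma atom_le_sum a x : Pt a -> atom_of le [set: A] x -> le x a ->
   le x (\sum_(y | atom_of le [set: A] y && le y a) y).
Proof.
move=> P ax xa; rewrite (bigD1 x) /=; last by rewrite ax xa.
apply: indep_sum => y /andP[/andP[ay ya] yx].
by apply: P; rewrite // eq_sym.
Qed.

Lemma sum_atoms a : Pt a -> \sum_(y | atom_of le [set: A] y && le y a) y = a.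
Proof.
move=> P; set S := \sum_(_ | _) _.
have Sa : le S a by apply: sum_le => y /andP[].
have aSa : le (S + a) a by apply: leD => //; exact: leR.
apply/eqP; rewrite -subr_eq0 oppE; apply/negPn/negP => nz.
have [z az za] := exists_atom nz.
have zA : le z a := leT za aSa.
have zS : le z S := atom_le_sum P az zA.
have := leX za zS; rewrite -addrA addrAC (addxx S) add0r => h.
by move: (atom_nz az); rewrite (Zlem zA h) eqxx.
Qed.

Lemma dich a z x : Pt a -> atom_of le [set: A] z -> le z a -> le x a ->
  ~~ le z x -> le z (z + x).
Proof.
move=> P az za xa nzx; rewrite -(sum_atoms (Pt_le P xa)).
apply: indep_sum => w /andP[aw wx]; apply: P => //; first exact: leT wx xa.
by apply: contraNneq nzx => ->.
Qed.


Lemma tile_Pt a : tile le a -> Pt a.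
Proof.
case=> _ h x y ax ay xa ya nxy; have := h x y ax ay.
by rewrite /tail !inE => /(_ xa ya nxy).
Qed.

Lemma Pt_tile a : a != 0 -> Pt a -> tile le a.
Proof.
move=> anz P; split => // x y ax ay; rewrite /tail !inE => xa ya nxy.
exact: P.
Qed.

Lemma i_ii a : Pt a -> exists (I : finType) (f : A -> {set I}), tail_iso_powerset le a f.
Proof.
move=> P.
pose I := {x : A | atom_of le [set: A] x && le x a}.
exists I; exists (fun x => [set i : I | le (val i) x]).
have vP (i : I) : atom_of le [set: A] (val i) /\ le (val i) a by case/andP: (valP i).
split.
- move=> x y; rewrite /tail !inE => xa ya E.
  rewrite -(sum_atoms (Pt_le P xa)) -(sum_atoms (Pt_le P ya)).
  apply: eq_bigl => z; case az: (atom_of le [set: A] z) => //=.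
  apply/idP/idP => h.
  + have zi : atom_of le [set: A] z && le z a by rewrite az (leT h xa).
    have : exist _ z zi \in [set i : I | le (val i) x] by rewrite inE.
    by rewrite E inE.
  + have zi : atom_of le [set: A] z && le z a by rewrite az (leT h ya).
    have : exist _ z zi \in [set i : I | le (val i) y] by rewrite inE.
    by rewrite -E inE.
- move=> S; exists (\sum_(i in S) val i).
    by rewrite /tail inE; apply: sum_le => i _; case: (vP i).
  apply/setP => i; rewrite inE; case: (vP i) => ai ia.
  case: (boolP (i \in S)) => iS.
    rewrite (bigD1 i) //=; apply: indep_sum => j /andP[_ ji].
    case: (vP j) => aj ja; apply: P => //.
    by rewrite (inj_eq val_inj) eq_sym.
  apply/negP => h.
  have : le (val i) (val i + \sum_(i in S) val i).
    apply: indep_sum => j jS; case: (vP j) => aj ja; apply: P => //.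
    by apply: contraNneq iS => /val_inj ->.
  by move/(Zlem h)=> e; move: (atom_nz ai); rewrite e eqxx.
- move=> x y; rewrite /tail !inE => xa ya; apply/setP => i; rewrite /symdiff !inE.
  case: (vP i); move: (val i) => z az za.
  have xya : le (x + y) a by apply: leD.
  case hx: (le z x); case hy: (le z y) => /=.
  + apply/negP => h; have := leX hx hy; rewrite -addrA => /(Zlem h) e.
    by move: (atom_nz az); rewrite e eqxx.
  + have := leX hx (dich P az za ya (negbT hy)).
    by rewrite addrACA addxx add0r.
  + have := leX (dich P az za xa (negbT hx)) hy.
    by rewrite addrA addxx add0r.
  + apply/negP => h.
    have := leX (dich P az za xa (negbT hx)) (dich P az za ya (negbT hy)).
    rewrite [z + (z + x)]addrA addxx add0r addrCA => /(Zlem h) e.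
    by move: (atom_nz az); rewrite e eqxx.
- move=> x y; rewrite /tail !inE => xa ya; apply/idP/subsetP => [h i|h].
    by rewrite !inE => hi; exact: leT hi h.
  rewrite -(sum_atoms (Pt_le P xa)); apply: sum_le => z /andP[az zx].
  have zi : atom_of le [set: A] z && le z a by rewrite az (leT zx xa).
  by have := h (exist _ z zi); rewrite !inE /=; apply.
Qed.

Lemma ii_i a (I : finType) (f : A -> {set I}) : a != 0 ->
  tail_iso_powerset le a f -> tile le a.
Proof.
move=> anz [finj fsurj fadd ford]; split => // x y ax ay tx ty nxy.
have t0 : (0 : A) \in tail le a by rewrite /tail inE le0.
have txy : x + y \in tail le a by move: tx ty; rewrite /tail !inE; apply: leD.
have f0 : f 0 = set0.
  by have := fadd 0 0 t0 t0; rewrite addr0 => ->; rewrite /symdiff setDv setU0.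
rewrite /indep (ford x (x + y) tx txy) (fadd _ _ tx ty).
apply/subsetP => i hi; rewrite /symdiff in_setU; apply/orP; left.
rewrite in_setD hi andbT; apply/negP => hy.
have [w tw fw] := fsurj [set i].
have w0 : w != 0.
  by apply/eqP => e; move: fw; rewrite e f0 => /setP/(_ i); rewrite !inE eqxx.
have wx : le w x by rewrite (ford w x tw tx) fw sub1set.
have wy : le w y by rewrite (ford w y tw ty) fw sub1set.
case/atomP: ax => _ /(_ w wx) [e|ex]; first by rewrite e eqxx in w0.
case/atomP: ay => _ /(_ w wy) [e|ey]; first by rewrite e eqxx in w0.
by move: nxy; rewrite -ex -ey eqxx.
Qed.

Lemma pw_intro (T : eqType) (r : rel T) (s : seq T) :
  uniq s -> {in s &, forall x y : T, x != y -> r x y} -> pairwise r s.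
Proof.
elim: s => [|x s IH] //; rewrite pairwise_cons /= => /andP[xs us] h.
apply/andP; split.
  apply/allP => y ys; apply: h; rewrite ?inE ?eqxx ?ys ?orbT //.
  by apply: contraNneq xs => ->.
apply: IH => // u v us' vs'; apply: h; by rewrite inE ?us' ?vs' orbT.
Qed.

Lemma pw_mem (T : eqType) (r : rel T) (s : seq T) (x y : T) :
  pairwise r s -> x \in s -> y \in s -> x != y -> r x y || r y x.
Proof.
elim: s => [|u s IH] //; rewrite pairwise_cons => /andP[/allP hu hs].
rewrite !inE => /orP[/eqP->|xs] /orP[/eqP->|ys] nxy.
- by rewrite eqxx in nxy.
- by rewrite hu.
- by rewrite hu ?orbT.
- exact: IH.
Qed.

Lemma exp_uniq (t : seq A) : all (atom_of le [set: A]) t -> pairwise (indep2 le) t -> uniq t.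
Proof.
elim: t => [|x t IH] //; rewrite pairwise_cons /= => /andP[ax at'] /andP[/allP hx ht].
rewrite IH // andbT; apply/negP => xt; case/andP: (hx x xt) => h _.
move: h; rewrite /indep addxx => h.
by move: (atom_nz ax); rewrite (leA h (le0 _)) eqxx.
Qed.

Lemma cons_exp z t c : atom_of le [set: A] z -> all (atom_of le [set: A]) t ->
  pairwise (indep2 le) t -> \sum_(x <- t) x = c -> le z (z + c) ->
  [/\ all (atom_of le [set: A]) (z :: t), pairwise (indep2 le) (z :: t) &
      \sum_(x <- z :: t) x = z + c].
Proof.
move=> az at' pt St zc; split; first by rewrite /= az.
  rewrite pairwise_cons pt andbT; apply/allP => y yt.
  have yc : le y c by rewrite -St; exact: pw_le.
  have zy := down zc yc.
  by rewrite /indep2 /indep zy isym.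
by rewrite big_cons St.
Qed.

Lemma exp_exists b : exists t, [/\ all (atom_of le [set: A]) t,
  pairwise (indep2 le) t & \sum_(x <- t) x = b].
Proof.
move: {2}#|tail le b| (leqnn #|tail le b|) => n; elim: n b => [|n IH] b hn.
  move: hn; rewrite leqn0 => /eqP/cards0_eq/setP/(_ b).
  by rewrite /tail !inE leR.
case: (eqVneq b 0) => [->|bnz]; first by exists [::]; rewrite big_nil.
have [z az zb] := exists_atom bnz.
have hb' : le (z + b) b by apply: leD => //; exact: leR.
have hlt : (#|tail le (z + b)%R| <= n)%N.
  rewrite -ltnS; apply: leq_trans hn; apply: proper_card; apply/properP; split.
    by apply/subsetP => w; rewrite /tail !inE => hw; exact: leT hw hb'.
  exists b; rewrite /tail !inE ?leR //; apply/negP => hby.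
  have e := leA hb' hby; move: (atom_nz az).
  suff -> : z = 0 by rewrite eqxx.
  have e' : z + b + b = b + b by rewrite e.
  by move: e'; rewrite -addrA !addxx addr0.
have [t [at' pt St]] := IH _ hlt.
exists (z :: t); have := cons_exp az at' pt St.
by rewrite addrA addxx add0r => /(_ zb).
Qed.

Lemma Pt_iv a : Pt a -> exists s : seq A, indep_atom_expansion le a s /\
                   forall t : seq A, indep_atom_expansion le a t -> perm_eq s t.
Proof.
move=> P; exists (enum [pred x | atom_of le [set: A] x && le x a]); split.
  split.
  - by apply/allP => x; rewrite mem_enum inE => /andP[].
  - apply: pw_intro; first exact: enum_uniq.
    move=> x y; rewrite !mem_enum !inE => /andP[ax xa] /andP[ay ya] nxy.
    by rewrite /indep2 /indep P // P // eq_sym.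
  - rewrite big_enum /=; rewrite -{2}(sum_atoms P); apply: eq_bigl => x; by rewrite inE.
move=> t [at' pt St]; apply: uniq_perm; first exact: enum_uniq.
  exact: exp_uniq.
move=> x; rewrite mem_enum inE; apply/andP/idP => [[ax xa]|xt].
  apply/negPn/negP => xt.
  have : le x (x + \sum_(y <- t) y).
    rewrite big_seq; apply: indep_sum => y yt; apply: P => //.
    - exact: (allP at').
    - by rewrite -St; exact: pw_le.
    - by apply: contraNneq xt => ->.
  rewrite St => /(Zlem xa) e.
  by move: (atom_nz ax); rewrite e eqxx.
by split; [exact: (allP at') | rewrite -St; exact: pw_le].
Qed.

Lemma iv_Pt a : (exists s : seq A, indep_atom_expansion le a s /\
                   forall t : seq A, indep_atom_expansion le a t -> perm_eq s t) -> Pt a.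
Proof.
case=> s [[as' ps Ss] U].
have mem_s z : atom_of le [set: A] z -> le z a -> z \in s.
  move=> az za; have [t [at' pt St]] := exp_exists (z + a).
  have := cons_exp az at' pt St; rewrite addrA addxx add0r => /(_ za) [h1 h2 h3].
  have := U (z :: t) (And3 h1 h2 h3) => /perm_mem ->.
  exact: mem_head.
move=> x y ax ay xa ya nxy.
have := pw_mem ps (mem_s x ax xa) (mem_s y ay ya) nxy.
by rewrite /indep2 /indep => /orP[/andP[]|/andP[]].
Qed.

End AP.
Unset Implicit Arguments. Set Strict Implicit.

Theorem theorem6p4 (A : finZmodType) (le : rel A) (hA : additive_poset le)
    (a : A) (ha : a != 0) :
  [<-> (* (i) *) tile le a;
       (* (ii) *) exists (I : finType) (f : A -> {set I}), tail_iso_powerset le a f;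
       (* (iii) *) (forall x y : A, atom_of le (tail le a) x -> atom_of le (tail le a) y ->
                      x != y -> indep le x y)
                   /\ \sum_(x | atom_of le (tail le a) x) x = a;
       (* (iv) *) exists s : seq A, indep_atom_expansion le a s /\
                   forall t : seq A, indep_atom_expansion le a t -> perm_eq s t].
Proof.
tfae.
- by move/tile_Pt/(i_ii hA).
- case=> I [f h]; have P := tile_Pt (ii_i hA ha h); split.
    move=> x y; rewrite !(atom_tail hA) => /andP[ax xa] /andP[ay ya] nxy.
    exact: P.
  rewrite -{2}(sum_atoms hA P); apply: eq_bigl => x; exact: (atom_tail hA).
- case=> h1 h2; apply: (Pt_iv hA) => x y ax ay xa ya nxy.
  by apply: h1; rewrite ?(atom_tail hA) ?ax ?ay.
- by move/(iv_Pt hA); apply: Pt_tile.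
Qed.
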